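(* Let $P$ be a valid path with $m=m_T^P$ toll arcs $\tau_1,\dots,\tau_m$, and define recursively for $k=1,\dots,m$ $$t_k=\min_{0\le i<k<j\le m+1}\Big\{\mathcal{U}_{i,j}-\mathcal{L}_{i,j}-\sum_{l=i+1}^{k-1}t_l\Big\}.$$ Then the toll assignment $T(\tau_k)=t_k$ ($k=1,\dots,m$) is optimal for $P$: it is consistent with $P$, and every toll vector $T'$ consistent with $P$ satisfies $\sum_{k=1}^m T'(\tau_k)\le\sum_{k=1}^m t_k$.
   Context: Setting: $G=(V,A)$ is a directed multigraph with $A=A_T\cup A_U$ partitioned into toll arcs and toll-free arcs, fixed costs $c:A_T\to\mathbf{N}$, $d:A_U\to\mathbf{N}$, and vertices $s,t$ such that there is an $s$–$t$ path using only toll-free arcs. A toll vector $T$ assigns a toll $T(e)\ge0$ to each toll arc; under $T$ a toll arc $e$ costs $c(e)+T(e)$ and a toll-free arc $e$ costs $d(e)$; path length is the sum of arc costs. For an $s$–$t$ path $P$, $\mathcal{N}_T(P)$ is the network with all toll arcs not on $P$ deleted, with costs induced by $T$. A path $P$ from $s$ to $t$ is valid if it contains $m_T^P\ge1$ toll arcs and is a shortest $s$–$t$ path in $\mathcal{N}_0(P)$ (all tolls zero). Write a valid path as $P=(\upsilon_{0,1},\tau_1,\upsilon_{1,2},\dots,\tau_m,\upsilon_{m,m+1})$ with $\tau_i$ the $i$-th toll arc in order of traversal; set $\mathrm{TERM}(\tau_0)=s$, $\mathrm{INIT}(\tau_{m+1})=t$. For $0\le i<j\le m+1$, $\mathcal{U}_{i,j}$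 is the length of a shortest path from $\mathrm{TERM}(\tau_i)$ to $\mathrm{INIT}(\tau_j)$ using only toll-free arcs ($+\infty$ if none), and $\mathcal{L}_{k,l}=\sum_{i=k}^{l-1}\mathcal{U}_{i,i+1}+\sum_{i=k+1}^{l-1}c(\tau_i)$ (empty sums are $0$). A toll vector is consistent with $P$ if $P$ is a shortest $s$–$t$ path in $\mathcal{N}_T(P)$ (only tolls on arcs of $P$ matter). *)

(* Defs.v *)
From HB Require Import structures.
From mathcomp Require Import all_boot all_order all_algebra.
From mathcomp Require Import boolp.
Set Implicit Arguments. Unset Strict Implicit. Unset Printing Implicit Defensive.
Import Order.TTheory GRing.Theory Num.Theory.

Section Toll.
(* A directed multigraph: vertex type V, arc type A, arc e goes src e -> dst e.
   toll e <=> e is a toll arc (e in A_T); otherwise e is toll-free (A_U).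
   w e is the fixed cost: c(e) for toll arcs, d(e) for toll-free arcs. *)
Variables (V A : finType) (src dst : A -> V) (toll : pred A) (w : A -> nat).
Variables (s t : V).

Fixpoint walk (u v : V) (p : seq A) : bool :=
  match p with
  | [::] => u == v
  | e :: p' => (src e == u) && walk (dst e) v p'
  end.

Definition is_path (u v : V) (p : seq A) : bool :=
  walk u v p && uniq (u :: map dst p).

Definition nlen (f : A -> nat) (p : seq A) : nat := \sum_(e <- p) f e.

Definition tolls_of (p : seq A) : seq A := [seq e <- p | toll e].

Definition inN (P : seq A) (e : A) : bool := ~~ toll e || (e \in P).

Definition valid (P : seq A) : Prop :=
  [/\ is_path s t P, (0 < size (tolls_of P))%N &
      forall p, is_path s t p -> all (inN P) p -> (nlen w P <= nlen w p)%N].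

(* shortest toll-free path length from u to v; None stands for +infinity *)
Definition tf_len (u v : V) (n : nat) : bool :=
  `[< exists p, [/\ is_path u v p, all (predC toll) p & nlen w p = n] >].

Definition tfdist (u v : V) : option nat :=
  match pselect (exists n, tf_len u v n) with
  | left H => Some (ex_minn H)
  | right _ => None
  end.

Section Path.
Variable P : seq A.
Let tau := tolls_of P.
Let m := size tau.

Definition TERM (i : nat) : V :=
  if i is i'.+1 then (if onth tau i' is Some e then dst e else s) else s.
Definition INIT (j : nat) : V :=
  if j is j'.+1 then (if onth tau j' is Some e then src e else t) else t.

Definition Uij (i j : nat) : option nat := tfdist (TERM i) (INIT j).
Definition ctau (i : nat) : nat := nth 0%N (map w tau) i.-1.
(* L_{k,l}; only finite U_{i,i+1} occur here for valid paths *)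
Definition Lkl (k l : nat) : nat :=
  (\sum_(k <= i < l) odflt 0%N (Uij i i.+1) + \sum_(k.+1 <= i < l) ctau i)%N.

Variable R : realFieldType.
Local Open Scope ring_scope.

Definition seqmin (l : seq R) : R := foldr Num.min (head 0 l) l.

(* t_k given ts = [:: t_1; ...; t_(k-1)]; the minimum is over the
   pairs 0 <= i < k < j <= m+1 with U_{i,j} finite (terms with
   U_{i,j} = +infinity never attain the minimum; (0,m+1) is finite) *)
Definition next_toll (ts : seq R) (k : nat) : R :=
  seqmin [seq (u%:R - (Lkl ij.1 ij.2)%:R
                - \sum_(ij.1.+1 <= l < k) nth 0 ts l.-1)
         | ij <- [seq (i, j) | i <- iota 0 k, j <- iota k.+1 (m.+1 - k)],
           u <- (if Uij ij.1 ij.2 is Some u then [:: u] else [::])].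

Fixpoint opt_tolls (n : nat) : seq R :=
  if n is n'.+1 then let ts := opt_tolls n' in rcons ts (next_toll ts n)
  else [::].

Definition Topt (e : A) : R :=
  if e \in tau then nth 0 (opt_tolls m) (index e tau) else 0.

End Path.

Local Open Scope ring_scope.
Definition costT (R : realFieldType) (T : A -> R) (e : A) : R :=
  (w e)%:R + (if toll e then T e else 0).
Definition rlen (R : realFieldType) (T : A -> R) (p : seq A) : R :=
  \sum_(e <- p) costT T e.

Definition toll_vector (R : realFieldType) (T : A -> R) : Prop :=
  forall e, toll e -> 0 <= T e.

Definition consistent (R : realFieldType) (P : seq A) (T : A -> R) : Prop :=
  forall p, is_path s t p -> all (inN P) p -> rlen T P <= rlen T p.

End Toll.

(* Main.v *)
Require Import Defs.
From HB Require Import structures.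
From mathcomp Require Import all_boot all_order all_algebra boolp.
From mathcomp Require Import lra zify.
Import Order.TTheory GRing.Theory Num.Theory.
Set Implicit Arguments. Unset Strict Implicit. Unset Printing Implicit Defensive.

Section Graph.
Variables (V A : finType) (src dst : A -> V).

Lemma walk_cat u v p1 p2 : walk src dst u v (p1 ++ p2) =
  walk src dst u (last u (map dst p1)) p1 && walk src dst (last u (map dst p1)) v p2.
Proof.
elim: p1 u => [|e p1 IH] u /=; first by rewrite eqxx.
by rewrite IH andbA.
Qed.

Lemma walk_last u v p : walk src dst u v p -> last u (map dst p) = v.
Proof. by elim: p u => [|e p IH] u /=; [move/eqP | case/andP=> _ /IH]. Qed.

Lemma is_path_cat u v p1 p2 : is_path src dst u v (p1 ++ p2) ->
  is_path src dst u (last u (map dst p1)) p1 /\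
  is_path src dst (last u (map dst p1)) v p2.
Proof.
rewrite /is_path walk_cat => /andP[/andP[w1 w2]].
rewrite map_cat -cat_cons cat_uniq => /and3P[u1 dis u2].
split; first by rewrite w1.
rewrite w2 /= u2 andbT.
apply/negP=> H; move/hasP: dis; apply; exists (last u (map dst p1)) => //.
by rewrite mem_last.
Qed.

Lemma drop_vtx x q n : n <= size q ->
  drop n (x :: map dst q) = last x (map dst (take n q)) :: map dst (drop n q).
Proof.
elim: q x n => [|e q IH] x [|n] //= Hn.
by rewrite IH.
Qed.

Lemma shortcut u v p : walk src dst u v p ->
  exists q, is_path src dst u v q /\ subseq q p.
Proof.
elim: p u => [|e p IH] u.
  by move=> /= H; exists [::]; rewrite /is_path /= H.
move=> H; have /andP[/eqP se /IH [q [/andP[wq uq] sq]]] : (src e == u) && walk src dst (dst e) v p := H.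
case: (boolP (u \in dst e :: map dst q)) => Hu.
  set vl := dst e :: map dst q in Hu uq.
  have Hn : index u vl <= size q.
    by have := index_mem u vl; rewrite Hu /= size_map ltnS.

  exists (drop (index u vl) q); split; last first.
    apply: subseq_trans (drop_subseq _ _) _; apply: subseq_trans sq _; exact: subseq_cons.
  have Hz : last (dst e) (map dst (take (index u vl) q)) = u.
    have := drop_vtx (dst e) Hn; rewrite -/vl (drop_nth u); last by rewrite index_mem.
    by rewrite nth_index // => [[<-]].
  apply/andP; split.
    by move: wq; rewrite -{1}(cat_take_drop (index u vl) q) walk_cat Hz => /andP[].
  by rewrite -{1}Hz -drop_vtx // drop_uniq.
exists (e :: q); split; last by rewrite /= eqxx.
by rewrite /is_path /= se eqxx wq /= Hu.
Qed.

Lemma subseq_sum (R : numDomainType) (f : A -> R) q p :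
  (forall e, 0 <= f e)%R -> subseq q p -> (\sum_(e <- q) f e <= \sum_(e <- p) f e)%R.
Proof.
move=> f0; elim: p q => [|x p IH] [|y q] //.
- by move=> _; rewrite big_nil; apply: sumr_ge0.
- rewrite [subseq _ _]/= !big_cons; case: eqP => [-> /IH|_ /IH H].
    by rewrite lerD2l.
  rewrite big_cons in H; apply: (le_trans H); by rewrite lerDr.
Qed.

End Graph.
Section PathFacts.
Variables (V A : finType) (src dst : A -> V) (toll : pred A) (w : A -> nat).
Variables (s t : V) (P : seq A) (x0 : A).
Hypothesis HP : is_path src dst s t P.
Local Notation tau := (tolls_of toll P).
Local Notation m := (size (tolls_of toll P)).

Definition cnt n := count toll (take n P).
Definition pos a := index (nth x0 tau a.-1) P.
Definition start a := if a is 0 then 0 else (pos a).+1.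
Definition endp b := if b <= m then pos b else size P.
Definition vtx n := last s (map dst (take n P)).

Lemma uniqP : uniq P.
Proof. by case/andP: HP => _ /= /andP[_ /map_uniq]. Qed.

Lemma uniq_tau : uniq tau.
Proof. exact: filter_uniq uniqP. Qed.

Lemma filter_take n : filter toll (take n P) = take (cnt n) tau.
Proof.
rewrite /tolls_of -{2}(cat_take_drop n P) filter_cat take_size_cat //.
by rewrite size_filter.
Qed.

Lemma cnt_le n : cnt n <= m.
Proof.
by rewrite /cnt /tolls_of size_filter -{2}(cat_take_drop n P) count_cat leq_addr.
Qed.

Lemma cntS n : n < size P -> cnt n.+1 = cnt n + toll (nth x0 P n).
Proof. by move=> Hn; rewrite /cnt (take_nth x0) // -cats1 count_cat /= addn0. Qed.

Lemma cnt_mono n1 n2 : n1 <= n2 -> cnt n1 <= cnt n2.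
Proof.
move=> H; rewrite /cnt -(take_takel P H) -{2}(cat_take_drop n1 (take n2 P)).
by rewrite count_cat leq_addr.
Qed.

Lemma cnt_size : cnt (size P) = m.
Proof. by rewrite /cnt take_size /tolls_of size_filter. Qed.

Lemma key n : n < size P -> toll (nth x0 P n) -> nth x0 tau (cnt n) = nth x0 P n.
Proof.
move=> Hn Ht; have E := filter_take n.+1.
have := congr1 (fun l => nth x0 l (cnt n)) E.
rewrite (take_nth x0) // filter_rcons Ht nth_rcons size_filter ltnn eqxx => ->.
rewrite nth_take // -/(cnt n.+1) cntS // Ht addn1 //.
Qed.

Section Pos.
Variable a : nat.
Hypotheses (a1 : 0 < a) (am : a <= m).
Let e := nth x0 tau a.-1.
Lemma e_in_tau : e \in tau.
Proof. by rewrite mem_nth // prednK. Qed.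
Lemma e_in_P : e \in P.
Proof. by have := e_in_tau; rewrite mem_filter => /andP[]. Qed.
Lemma e_toll : toll e.
Proof. by have := e_in_tau; rewrite mem_filter => /andP[]. Qed.
Lemma pos_lt : pos a < size P.
Proof. by rewrite /pos index_mem e_in_P. Qed.
Lemma nth_pos : nth x0 P (pos a) = e.
Proof. by rewrite /pos nth_index // e_in_P. Qed.
Lemma cnt_pos : cnt (pos a) = a.-1.
Proof.
have H := key pos_lt; rewrite nth_pos e_toll in H.
have Hc : cnt (pos a) < m.
  by have := cnt_le (pos a).+1; rewrite cntS ?pos_lt // nth_pos e_toll addn1.
by apply/eqP; rewrite -(nth_uniq x0 Hc _ uniq_tau) ?prednK // H.
Qed.
End Pos.

Lemma cnt_start a : a <= m -> cnt (start a) = a.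
Proof.
case: a => [|a] Ha /=; first by rewrite /cnt take0.
by rewrite cntS ?pos_lt // cnt_pos // nth_pos // e_toll // addn1.
Qed.

Lemma cnt_endp b : 0 < b <= m.+1 -> cnt (endp b) = b.-1.
Proof.
case/andP=> b1 bm; rewrite /endp; case: ifP => H; first exact: cnt_pos.
by rewrite cnt_size; have -> : b = m.+1 by apply/eqP; rewrite eqn_leq bm ltnNge H.
Qed.

Lemma start_le a : a <= m -> start a <= size P.
Proof. by case: a => [|a] Ha //=; exact: pos_lt. Qed.

Lemma endp_le b : 0 < b -> endp b <= size P.
Proof. by move=> b1; rewrite /endp; case: ifP => // H; apply: ltnW; exact: pos_lt. Qed.

Lemma start_mono a M : a <= M -> M <= m -> start a <= start M.
Proof.
move=> aM Mm; rewrite leqNgt; apply/negP => H.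
have := cnt_mono (ltnW H); rewrite !cnt_start ?(leq_trans aM) // => Ma.
have E : a = M by apply/eqP; rewrite eqn_leq aM Ma.
by rewrite E ltnn in H.
Qed.

Lemma start_endp l : l <= m -> start l <= endp l.+1.
Proof.
case: l => [|l] Hl //; rewrite leqNgt; apply/negP => H.
have H2 : endp l.+2 <= endp l.+1 by rewrite /endp Hl; rewrite ltnS in H.
have := cnt_mono H2; rewrite !cnt_endp ?Hl //= ?ltnS ?(ltnW Hl) //.
by rewrite ltnn.
Qed.


Lemma onth_lt i : i < m -> onth tau i = Some (nth x0 tau i).
Proof. by move=> H; rewrite onthE (nth_map x0). Qed.

Lemma onth_m : onth tau m = None.
Proof. by rewrite onthE nth_default // size_map. Qed.

Lemma walk_take n : walk src dst s (vtx n) (take n P).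
Proof.
by case/andP: HP; rewrite -{1}(cat_take_drop n P) walk_cat => /andP[].
Qed.

Lemma walk_drop n : walk src dst (vtx n) t (drop n P).
Proof.
by case/andP: HP; rewrite -{1}(cat_take_drop n P) walk_cat => /andP[].
Qed.

Lemma vtx0 : vtx 0 = s.
Proof. by rewrite /vtx take0. Qed.

Lemma vtx_size : vtx (size P) = t.
Proof. by rewrite /vtx take_size; case/andP: HP => Hw _; exact: walk_last Hw. Qed.

Lemma vtx_start a : a <= m -> vtx (start a) = TERM dst toll s P a.
Proof.
case: a => [|a] Ha //=; first exact: vtx0.
rewrite /vtx (take_nth x0) ?pos_lt // map_rcons last_rcons nth_pos //.
by rewrite onth_lt.
Qed.

Lemma vtx_endp b : 0 < b <= m.+1 -> vtx (endp b) = INIT src toll t P b.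
Proof.
case/andP=> b1 bm; rewrite /endp; case: ifP => H.
  have := walk_drop (pos b); rewrite (drop_nth x0) ?pos_lt // nth_pos //.
  case/andP=> /eqP <- _; case: b b1 bm H => [|b] //= _ _ H.
  by rewrite onth_lt.
have -> : b = m.+1 by apply/eqP; rewrite eqn_leq bm ltnNge H.
by rewrite vtx_size /= onth_m.
Qed.

Lemma path_mid n1 n2 : n1 <= n2 ->
  is_path src dst (vtx n1) (vtx n2) (drop n1 (take n2 P)).
Proof.
move=> H; have := HP; rewrite -{1}(cat_take_drop n2 P) => /is_path_cat [H1 _].
move: H1; rewrite -[X in is_path _ _ _ _ X](cat_take_drop n1 (take n2 P)) => /is_path_cat [_].
by rewrite take_takel.
Qed.

Section Costs.
Variables (R : realFieldType) (T : A -> R).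
Local Open Scope ring_scope.

Definition cum n := rlen toll w T (take n P).
Definition tv l := T (nth x0 tau l.-1).

Lemma rlen_cat p1 p2 : rlen toll w T (p1 ++ p2) = rlen toll w T p1 + rlen toll w T p2.
Proof. by rewrite /rlen big_cat. Qed.

Lemma rlen_split p : rlen toll w T p = (nlen w p)%:R + \sum_(e <- filter toll p) T e.
Proof. by rewrite /rlen /costT big_split /= big_filter /nlen natr_sum [X in _ = _ + X]big_mkcond. Qed.

Lemma rlen_tf p : all (predC toll) p -> rlen toll w T p = (nlen w p)%:R.
Proof.
move=> H; rewrite rlen_split; have -> : filter toll p = [::].
  by elim: p H => //= e p IH /andP[He /IH ->]; rewrite (negbTE He).
by rewrite big_nil addr0.
Qed.

Hypothesis T0 : toll_vector toll T.

Lemma costT_ge0 e : 0 <= costT toll w T e.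
Proof. by rewrite /costT; case: ifP => H; rewrite ?addr0 // addr_ge0 // T0. Qed.

Lemma rlen_ge0 p : 0 <= rlen toll w T p.
Proof. by apply: sumr_ge0 => e _; exact: costT_ge0. Qed.

Lemma cum_drop n : rlen toll w T (drop n P) = rlen toll w T P - cum n.
Proof. by rewrite -{2}(cat_take_drop n P) rlen_cat /cum addrAC subrr add0r. Qed.

Lemma cum_mid n1 n2 : (n1 <= n2)%N ->
  rlen toll w T (drop n1 (take n2 P)) = cum n2 - cum n1.
Proof.
move=> H; rewrite /cum -{2}(cat_take_drop n1 (take n2 P)) rlen_cat take_takel //.
by rewrite addrAC subrr add0r.
Qed.

Lemma cum_mono n1 n2 : (n1 <= n2)%N -> cum n1 <= cum n2.
Proof. by move=> H; rewrite -subr_ge0 -cum_mid //; exact: rlen_ge0. Qed.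

Lemma cum_start_endp l : (0 < l)%N -> (l <= m)%N ->
  cum (start l) = cum (endp l) + costT toll w T (nth x0 tau l.-1).
Proof.
move=> l1 lm; case: l l1 lm => [|l] // _ lm.
rewrite /= /endp lm /cum (take_nth x0) ?pos_lt // -cats1 rlen_cat nth_pos //.
by rewrite /rlen big_seq1.
Qed.

Lemma cum_split n : cum n =
  (nlen w (take n P))%:R + \sum_(1 <= l < (cnt n).+1) tv l.
Proof.
rewrite /cum rlen_split filter_take (big_nth x0) size_takel ?cnt_le //.
congr (_ + _); rewrite big_add1 /=.
by apply: eq_big_nat => i /andP[_ Hi]; rewrite /tv /= nth_take.
Qed.

Lemma g_formula a b : (a < b)%N -> (b <= m.+1)%N ->
  cum (endp b) - cum (start a) =
  (nlen w (take (endp b) P))%:R - (nlen w (take (start a) P))%:R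
  + \sum_(a.+1 <= l < b) tv l.
Proof.
move=> ab bm; rewrite !cum_split cnt_endp ?bm ?(leq_ltn_trans _ ab) // cnt_start;
  last by rewrite -ltnS (leq_trans ab).
rewrite prednK ?(leq_ltn_trans _ ab) // (@big_cat_nat _ _ _ a.+1 1 b) //=.
by lra.
Qed.

End Costs.

Lemma tfdist_le u v n : tf_len src dst toll w u v n ->
  exists k, tfdist src dst toll w u v = Some k /\ k <= n.
Proof.
move=> Hn; rewrite /tfdist; case: pselect => [H|H].
  by exists (ex_minn H); split => //; case: ex_minnP => k _; apply.
by exfalso; apply: H; exists n.
Qed.

Lemma tfdist_Some u v k : tfdist src dst toll w u v = Some k ->
  tf_len src dst toll w u v k.
Proof. by rewrite /tfdist; case: pselect => // H [<-]; case: ex_minnP. Qed.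

Lemma is_path_cons u v e p : is_path src dst u v (e :: p) ->
  src e = u /\ is_path src dst (dst e) v p.
Proof.
rewrite /is_path => /andP[H1 H3].
have /andP[/eqP H4 H2] : (src e == u) && walk src dst (dst e) v p := H1.
by split => //; rewrite H2; case/andP: H3.
Qed.

Lemma INIT_last : INIT src toll t P m.+1 = t.
Proof. by rewrite /= onth_m. Qed.

Local Open Scope ring_scope.

Lemma nec (R : realFieldType) (T : A -> R) :
  toll_vector toll T -> consistent src dst toll w s t P T ->
  forall a b u, (a < b)%N -> (b <= m.+1)%N ->
  Uij src dst toll w s t P a b = Some u ->
  cum T (endp b) - cum T (start a) <= u%:R.
Proof.
move=> T0 HC a b u ab bm /tfdist_Some /asboolP [q [Hq Htf Hlen]].
have am : (a <= m)%N by rewrite -ltnS (leq_trans ab).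
have b0 : (0 < b)%N by apply: leq_ltn_trans ab.
set W := take (start a) P ++ q ++ drop (endp b) P.
have HW : walk src dst s t W.
  rewrite /W walk_cat; apply/andP; split; first exact: walk_take.
  change (walk src dst (vtx (start a)) t (q ++ drop (endp b) P)).
  case/andP: Hq => wq _.
  rewrite vtx_start // walk_cat (walk_last wq) wq /= -vtx_endp ?b0 //.
  exact: walk_drop.
have [p [Hp Hsub]] := shortcut HW.
have Hin : all (inN toll P) p.
  apply/allP => e /(mem_subseq Hsub); rewrite /W !mem_cat.
  case/or3P => [/mem_take H| H | /mem_drop H]; rewrite /inN ?H ?orbT //.
  by have := allP Htf e H; rewrite /= => ->.
have H1 := HC p Hp Hin.
have H2 : rlen toll w T p <= rlen toll w T W := subseq_sum (costT_ge0 T0) Hsub.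
move: H2; rewrite /W !rlen_cat cum_drop (rlen_tf T Htf) Hlen -/(cum T (start a)).
move: H1; lra.
Qed.

Lemma suff (R : realFieldType) (T : A -> R) :
  toll_vector toll T ->
  (forall a b u, (a < b)%N -> (b <= m.+1)%N ->
     Uij src dst toll w s t P a b = Some u ->
     cum T (endp b) - cum T (start a) <= u%:R) ->
  consistent src dst toll w s t P T.
Proof.
move=> T0 HG.
have main : forall n q x a M, (size q <= n)%N -> is_path src dst x t q ->
    all (inN toll P) q -> (a <= M)%N -> (M <= m)%N -> x = TERM dst toll s P a ->
    rlen toll w T P - cum T (start M) <= rlen toll w T q.
  elim=> [|n IH] q x a M Hs Hq Hin aM Mm Hx;
    (case: (boolP (has toll q)) => Hh; last first).
  1,3: have Htf : all (predC toll) q by rewrite all_predC.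
  1,2: have [k [Hk kl]] : exists k, Uij src dst toll w s t P a m.+1 = Some k /\ (k <= nlen w q)%N
         by apply: tfdist_le; apply/asboolP; exists q; rewrite -Hx INIT_last.
  1,2: have := HG a m.+1 k; rewrite ltnS (leq_trans aM Mm) leqnn => /(_ erefl erefl Hk).
  1,2: rewrite /endp ltnn /cum take_size (rlen_tf T Htf).
  1,2: have := cum_mono T0 (start_mono aM Mm); rewrite -(ler_nat R) in kl.
  1,2: by rewrite /cum; lra.
  by move: Hs; rewrite leqn0 size_eq0 => /eqP Eq; rewrite Eq in Hh.
  set i := find toll q.
  have Hi : (i < size q)%N by rewrite -has_find.
  set e := nth x0 q i.
  have Ee : q = take i q ++ e :: drop i.+1 q by rewrite -(drop_nth x0) // cat_take_drop.
  have te : toll e by exact: nth_find.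
  have eP : e \in P by have := allP Hin e (mem_nth x0 Hi); rewrite /inN te.
  have etau : e \in tau by rewrite mem_filter te eP.
  set b := (index e tau).+1.
  have b0 : (0 < b)%N by [].
  have bm : (b <= m)%N by rewrite /b index_mem.
  have eb : nth x0 tau b.-1 = e by rewrite /= nth_index.
  have TERMb : TERM dst toll s P b = dst e by rewrite /= onth_lt ?index_mem // nth_index.
  have INITb : INIT src toll t P b = src e by rewrite /= onth_lt ?index_mem // nth_index.
  have Hq' : is_path src dst x t (take i q ++ e :: drop i.+1 q) by rewrite -Ee.
  move/is_path_cat: Hq' => [Hq1 /is_path_cons [se Hq2]].
  have Htf : all (predC toll) (take i q).
    by rewrite all_predC has_take // ltnn.
  have Hin2 : all (inN toll P) (drop i.+1 q).
    by apply/allP => y /mem_drop Hy; exact: (allP Hin y Hy).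
  have Hs2 : (size (drop i.+1 q) <= n)%N by rewrite size_drop leq_subLR; apply: leq_trans Hs _; rewrite addSn ltnS leq_addl.
  have Hrq : rlen toll w T q = rlen toll w T (take i q) + costT toll w T e
                 + rlen toll w T (drop i.+1 q).
    by rewrite {1}Ee rlen_cat /rlen big_cons addrA.
  rewrite Hrq.
  have Hc0 := costT_ge0 T0 e; have Hr0 := rlen_ge0 T0 (take i q).
  case: (ltnP M b) => Mb.
    have IH1 := IH _ _ b b Hs2 Hq2 Hin2 (leqnn b) bm (esym TERMb).
    have [k [Hk kl]] : exists k, Uij src dst toll w s t P a b = Some k /\ (k <= nlen w (take i q))%N.
      by apply: tfdist_le; apply/asboolP; exists (take i q); rewrite -Hx INITb se; split.
    have := HG a b k (leq_ltn_trans aM Mb) (leq_trans bm (leqnSn m)) Hk.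
    rewrite (rlen_tf T Htf); rewrite -(ler_nat R) in kl.
    have := cum_mono T0 (start_mono aM Mm).
    have := cum_start_endp T b0 bm; rewrite eb.
    move: IH1; lra.
  have IH1 := IH _ _ b M Hs2 Hq2 Hin2 Mb Mm (esym TERMb).
  move: IH1; lra.
move=> p Hp Hin.
have := main (size p) p s 0%N 0%N (leqnn _) Hp Hin (leqnn 0) (leq0n m) erefl.
by rewrite /cum /= take0 /rlen big_nil subr0.
Qed.

Lemma foldr_min_le (R : realFieldType) (l : seq R) a x :
  x \in l -> foldr Num.min a l <= x.
Proof.
elim: l => //= y l IH; rewrite in_cons => /orP[/eqP->|/IH H].
  by rewrite ge_min lexx.
by rewrite ge_min H orbT.
Qed.

Lemma foldr_min_in (R : realFieldType) (l : seq R) a :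
  foldr Num.min a l \in a :: l.
Proof.
elim: l => [|y l IH] /=; first by rewrite mem_seq1.
rewrite minEle; case: ifP => _; first by rewrite !in_cons eqxx orbT.
move: IH; rewrite !in_cons => /orP[->//|->]; by rewrite !orbT.
Qed.

Lemma seqmin_le (R : realFieldType) (l : seq R) x : x \in l -> seqmin l <= x.
Proof. exact: foldr_min_le. Qed.

Lemma seqmin_in (R : realFieldType) (l : seq R) x : x \in l -> seqmin l \in l.
Proof.
case: l => [//|y l] _; have := foldr_min_in (y :: l) y.
by rewrite /seqmin /= in_cons => /orP[/eqP->|]; rewrite ?mem_head.
Qed.

Section Opt.
Variable R : realFieldType.
Local Notation U := (Uij src dst toll w s t P).
Local Notation Lk := (Lkl src dst toll w s t P).
Local Notation opt := (opt_tolls src dst toll w s t P R).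
Definition tt k := nth 0 (opt m) k.-1.

Lemma size_opt n : size (opt n) = n.
Proof. by elim: n => //= n IH; rewrite size_rcons IH. Qed.

Lemma nth_opt N n l : (l < n)%N -> (n <= N)%N -> nth 0 (opt N) l = nth 0 (opt n) l.
Proof.
elim: N => [|N IH] ln nN; first by move: (leq_trans ln nN).
case: (ltnP N n) => Nn.
  by have -> : n = N.+1 by apply/eqP; rewrite eqn_leq nN.
by rewrite /= nth_rcons size_opt (leq_trans ln Nn) IH.
Qed.

Lemma tt_next k : (0 < k)%N -> (k <= m)%N -> tt k = next_toll src dst toll w s t P (opt k.-1) k.
Proof.
case: k => [|k] // _ km; rewrite /tt (nth_opt (n := k.+1)) //=.
by rewrite nth_rcons size_opt ltnn eqxx.
Qed.

Lemma sum_opt k i : (0 < k)%N -> (k <= m)%N ->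
  \sum_(i.+1 <= l < k) nth 0 (opt k.-1) l.-1 = \sum_(i.+1 <= l < k) tt l.
Proof.
move=> k0 km; apply: eq_big_nat => l /andP[il lk].
rewrite /tt (nth_opt (n := k.-1)) //; last by rewrite (leq_trans (leq_pred k)).
by rewrite -ltnS !prednK // (leq_ltn_trans _ il).
Qed.

Lemma tt_le k i j u : (0 < k)%N -> (k <= m)%N -> (i < k)%N -> (k < j)%N -> (j <= m.+1)%N ->
  U i j = Some u -> tt k <= u%:R - (Lk i j)%:R - \sum_(i.+1 <= l < k) tt l.
Proof.
move=> k0 km ik kj jm Hu; rewrite tt_next // -sum_opt //.
apply: seqmin_le; apply/allpairsPdep; exists (i, j); exists u; split => //=.
- have E : (k.+1 + (m.+1 - k) = m.+2)%N by rewrite addSn subnKC // (leq_trans km).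
  by apply/allpairsPdep; exists i, j; rewrite !mem_iota /= ik kj E ltnS jm.
- by rewrite Hu mem_seq1.
Qed.

Hypothesis HU0 : exists u, U 0 m.+1 = Some u.

Lemma tt_eq k : (0 < k)%N -> (k <= m)%N -> exists i j u,
  [/\ (i < k)%N, (k < j)%N, (j <= m.+1)%N, U i j = Some u &
      tt k = u%:R - (Lk i j)%:R - \sum_(i.+1 <= l < k) tt l].
Proof.
move=> k0 km; case: HU0 => u0 Hu0.
rewrite tt_next // /next_toll.
set L := [seq _ | ij <- _, u <- _].
have : seqmin L \in L.
  apply: (@seqmin_in _ _ (u0%:R - (Lk 0 m.+1)%:R
      - \sum_(1 <= l < k) nth 0 (opt k.-1) l.-1)).
  apply/allpairsPdep; exists (0%N, m.+1); exists u0; split => //=.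
  - have E : (k.+1 + (m.+1 - k) = m.+2)%N by rewrite addSn subnKC // (leq_trans km).
    by apply/allpairsPdep; exists 0%N, m.+1; rewrite !mem_iota /= k0 E ltnS km leqnn.
  - by rewrite Hu0 mem_seq1.
case/allpairsPdep => [[i j]] [u] [/allpairsPdep [i' [j' [Hi Hj Eij]]]].
case: Eij => -> -> /=; rewrite /= => Hu ->; move: Hi Hj; rewrite !mem_iota add0n => /andP[_ ik] /andP[kj].
have E : (k.+1 + (m.+1 - k) = m.+2)%N by rewrite addSn subnKC // (leq_trans km).
rewrite E ltnS => jm.
case Eu : (U i' j') Hu => [u'|] //; rewrite mem_seq1 => /eqP ->.
exists i', j', u'; split => //.
by rewrite sum_opt.
Qed.

Hypothesis HL : forall i j u, (i < j)%N -> (j <= m.+1)%N -> U i j = Some u ->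
  (Lk i j)%:R <= u%:R :> R.

Definition Cons (tv : nat -> R) := forall i j u, (i < j)%N -> (j <= m.+1)%N ->
  U i j = Some u -> \sum_(i.+1 <= l < j) tv l <= u%:R - (Lk i j)%:R.

Lemma K1 k i j u : (0 < k)%N -> (k <= m)%N -> (i < k)%N -> (k < j)%N -> (j <= m.+1)%N ->
  U i j = Some u -> \sum_(i.+1 <= l < k.+1) tt l <= u%:R - (Lk i j)%:R.
Proof.
move=> k0 km ik kj jm Hu; have := tt_le k0 km ik kj jm Hu.
rewrite big_nat_recr //=; lra.
Qed.

Lemma tt_cons : Cons tt.
Proof.
move=> i j u ij jm Hu; have := HL ij jm Hu.
case: (ltnP i.+1 j) => H.
  have E : (j.-1).+1 = j by lia.
  have a1 : (0 < j.-1)%N by lia.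
  have a2 : (j.-1 <= m)%N by lia.
  have a3 : (i < j.-1)%N by lia.
  have a4 : (j.-1 < j)%N by lia.
  by have := K1 a1 a2 a3 a4 jm Hu; rewrite E.
have -> : j = i.+1 by apply/eqP; rewrite eqn_leq H.
by rewrite big_geq // subr_ge0.
Qed.

Lemma tt_ge0 k : (0 < k)%N -> (k <= m)%N -> 0 <= tt k.
Proof.
move=> k0 km; have [i [j [u [ik kj jm Hu ->]]]] := tt_eq k0 km.
have := HL (ltn_trans ik kj) jm Hu.
case: (ltnP i.+1 k) => H.
  have E : (k.-1).+1 = k by lia.
  have a1 : (0 < k.-1)%N by lia.
  have a2 : (k.-1 <= m)%N by lia.
  have a3 : (i < k.-1)%N by lia.
  have a4 : (k.-1 < j)%N by lia.
  have := K1 a1 a2 a3 a4 jm Hu; rewrite E => H1 _.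
  by rewrite subr_ge0.
have -> : k = i.+1 by apply/eqP; rewrite eqn_leq H.
by rewrite big_geq // subr0 subr_ge0.
Qed.

Lemma tt_opt (tv : nat -> R) : (forall l, (0 < l)%N -> (l <= m)%N -> 0 <= tv l) ->
  Cons tv -> \sum_(1 <= l < m.+1) tv l <= \sum_(1 <= l < m.+1) tt l.
Proof.
move=> tv0 Hc.
suff : forall n k, (k <= n)%N -> (k <= m)%N ->
    \sum_(1 <= l < k.+1) tv l <= \sum_(1 <= l < k.+1) tt l by apply; exact: leqnn.
elim=> [|n IH] [|k] //= kn km; try by rewrite !big_geq.
have [i [j [u [ik kj jm Hu Et]]]] := tt_eq (ltn0Sn k) km.
have S : forall F : nat -> R, \sum_(1 <= l < k.+2) F l =
    \sum_(1 <= l < i.+1) F l + \sum_(i.+1 <= l < k.+2) F l.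
  by move=> F; apply: big_cat_nat; lia.
rewrite !S.
have H1 := IH i (leq_trans (ik : (i < k.+1)%N) kn) (leq_trans (ltnW ik) km).
have H2 : \sum_(i.+1 <= l < k.+2) tt l = u%:R - (Lk i j)%:R.
  by rewrite big_nat_recr //= Et; lra.
have H3 : \sum_(i.+1 <= l < k.+2) tv l <= \sum_(i.+1 <= l < j) tv l.
  have S2 : \sum_(i.+1 <= l < j) tv l =
    \sum_(i.+1 <= l < k.+2) tv l + \sum_(k.+2 <= l < j) tv l.
    by apply: big_cat_nat; lia.
  rewrite S2 lerDl big_nat_cond; apply: sumr_ge0 => l /andP[/andP[l1 lj] _].
  by apply: tv0; [apply: leq_trans l1 | rewrite -ltnS (leq_trans lj)].
have H4 := Hc i j u (ltn_trans ik kj) jm Hu.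
lra.
Qed.

End Opt.


Section Main.
Variable R : realFieldType.
Local Notation U := (Uij src dst toll w s t P).
Local Notation Lk := (Lkl src dst toll w s t P).
Let T0 : A -> R := fun _ => 0.

Lemma rlen_T0 p : rlen toll w T0 p = (nlen w p)%:R.
Proof. by rewrite rlen_split big1 ?addr0. Qed.

Lemma T0_vec : toll_vector toll T0.
Proof. by []. Qed.

Hypothesis Hval : valid src dst toll w s t P.

Lemma T0_cons : consistent src dst toll w s t P T0.
Proof.
case: Hval => _ _ H p Hp Hin; rewrite !rlen_T0 ler_nat; exact: H.
Qed.

Lemma HG0 a b u : (a < b)%N -> (b <= m.+1)%N -> U a b = Some u ->
  cum T0 (endp b) - cum T0 (start a) <= u%:R.
Proof. move=> ab bm Hu; have := @nec R T0 T0_vec T0_cons a b u ab bm Hu. exact. Qed.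

Lemma HUseg l : (l <= m)%N -> exists u, U l l.+1 = Some u /\
  u%:R = cum T0 (endp l.+1) - cum T0 (start l).
Proof.
move=> lm; set seg := drop (start l) (take (endp l.+1) P).
have sl := start_endp lm.
have Hp : is_path src dst (TERM dst toll s P l) (INIT src toll t P l.+1) seg.
  by rewrite -vtx_start // -vtx_endp ?ltnS //; exact: path_mid.
have Htf : all (predC toll) seg.
  rewrite all_predC has_count -leqNgt leqn0.
  have E : cnt (endp l.+1) = l by rewrite cnt_endp //= ltnS lm.
  move: E; rewrite /cnt -{1}(cat_take_drop (start l) (take (endp l.+1) P)).
  rewrite count_cat take_takel // -/(cnt (start l)) cnt_start //.
  rewrite -/seg; lia.
have [k [Hk kl]] : exists k, U l l.+1 = Some k /\ (k <= nlen w seg)%N.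
  by apply: tfdist_le; apply/asboolP; exists seg.
exists k; split => //.
have := HG0 (ltnSn l) lm Hk; rewrite -cum_mid // rlen_T0 -(ler_nat R) in kl * => H.
by apply/eqP; rewrite eq_le H kl.
Qed.

Lemma Lkl_eq a b : (a < b)%N -> (b <= m.+1)%N ->
  (Lk a b)%:R = cum T0 (endp b) - cum T0 (start a) :> R.
Proof.
move=> ab; elim: b ab => [//|b IH] ab bm.
have am : (a <= m)%N by lia.
case: (ltnP a b) => H.
  have bm' : (b <= m)%N by lia.
  have b0 : (0 < b)%N by lia.
  have IH' := IH H (leq_trans bm' (leqnSn _)); rewrite /Lkl natrD in IH'.
  have [u [Hu Eu]] := HUseg bm'.
  have Ec : ctau toll w P b = w (nth x0 tau b.-1).
    by rewrite /ctau (nth_map x0) //; lia.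
  have Hs := cum_start_endp T0 b0 bm'; rewrite /costT /T0 if_same addr0 in Hs.
  rewrite /Lkl !big_nat_recr //= !natrD Hu /= Ec; lra.
have Eab : a = b by apply/eqP; rewrite eqn_leq H -ltnS ab.
subst a; rewrite /Lkl big_nat1 big_geq // addn0.
by have [u [Hu Eu]] := HUseg am; rewrite Hu /= Eu.
Qed.

Hypothesis Htf0 : exists p, is_path src dst s t p && all (predC toll) p.

Lemma HU0' : exists u, U 0 m.+1 = Some u.
Proof.
case: Htf0 => p /andP[Hp Hp'].
have [k [Hk _]] : exists k, tfdist src dst toll w s t = Some k /\ (k <= nlen w p)%N.
  by apply: tfdist_le; apply/asboolP; exists p.
by exists k; rewrite /Uij INIT_last.
Qed.

Lemma HL' i j u : (i < j)%N -> (j <= m.+1)%N -> U i j = Some u -> (Lk i j)%:R <= u%:R :> R.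
Proof. by move=> ij jm Hu; rewrite Lkl_eq //; exact: HG0. Qed.

Lemma Gform (T : A -> R) a b : (a < b)%N -> (b <= m.+1)%N ->
  cum T (endp b) - cum T (start a) = (Lk a b)%:R + \sum_(a.+1 <= l < b) tv T l.
Proof.
by move=> ab bm; rewrite g_formula // Lkl_eq // /cum !rlen_T0.
Qed.

Lemma sum_tau (T : A -> R) : \sum_(e <- tau) T e = \sum_(1 <= l < m.+1) tv T l.
Proof. by rewrite (big_nth x0) big_add1. Qed.

Lemma sum_ts : \sum_(x <- opt_tolls src dst toll w s t P R m) x = \sum_(1 <= l < m.+1) tt R l.
Proof. by rewrite (big_nth 0) size_opt big_add1. Qed.

Lemma tv_Topt l : (0 < l)%N -> (l <= m)%N -> tv (Topt src dst toll w s t P R) l = tt R l.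
Proof.
move=> l0 lm; have lm' : (l.-1 < m)%N by rewrite prednK. rewrite /tv /Topt mem_nth //.
by rewrite index_uniq ?uniq_tau.
Qed.

Lemma main_thm :
  let tau := tolls_of toll P in
  let ts := opt_tolls src dst toll w s t P R (size tau) in
  let T := Topt src dst toll w s t P R in
  [/\ toll_vector toll T,
      consistent src dst toll w s t P T &
      forall T' : A -> R, toll_vector toll T' ->
        consistent src dst toll w s t P T' ->
        \sum_(e <- tau) T' e <= \sum_(x <- ts) x].
Proof.
move=> tau' ts T.
have Tvec : toll_vector toll T.
  move=> e te; rewrite /T /Topt; case: ifP => H //.
  have im : ((index e tau).+1 <= m)%N by rewrite index_mem.
  by have := tt_ge0 HU0' HL' (k := (index e tau).+1) erefl im.
split => //.
  apply: suff => // a b u ab bm Hu; rewrite Gform //.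
  have := tt_cons HL' ab bm Hu.
  have -> : \sum_(a.+1 <= l < b) tv T l = \sum_(a.+1 <= l < b) tt R l.
    by apply: eq_big_nat => l /andP[l1 lb]; rewrite tv_Topt //; lia.
  lra.
move=> T' T'v T'c; rewrite /ts sum_tau sum_ts.
apply: (tt_opt HU0').
  move=> l l0 lm; apply: T'v; exact: e_toll.
move=> i j u ij jm Hu; have := nec T'v T'c ij jm Hu; rewrite Gform //; lra.
Qed.

End Main.

End PathFacts.

Unset Implicit Arguments.
Local Open Scope ring_scope.

Theorem corollary1 (V A : finType) (src dst : A -> V) (toll : pred A)
  (w : A -> nat) (s t : V) (R : realFieldType) (P : seq A) :
  (exists p, is_path src dst s t p && all (predC toll) p) ->
  valid src dst toll w s t P ->
  let tau := tolls_of toll P in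
  let ts := opt_tolls src dst toll w s t P R (size tau) in
  let T := Topt src dst toll w s t P R in
  [/\ toll_vector toll T,
      consistent src dst toll w s t P T &
      forall T' : A -> R, toll_vector toll T' ->
        consistent src dst toll w s t P T' ->
        \sum_(e <- tau) T' e <= \sum_(x <- ts) x].
Proof.
move=> Htf Hval.
have Hv := Hval; case: Hv => HP Hm _.
case E: (tolls_of toll P) Hm => [//|x0 l] _.
rewrite -E.
exact: (@main_thm V A src dst toll w s t P x0 HP R Hval Htf).
Qed.
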